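(* Let $\Pi$ be a protocol and $\sigma,\sigma'\in\mathrm{br}(\Pi)$ be two sender best responses such that under each of $(\Pi,\sigma)$ and $(\Pi,\sigma')$ the game ends with probability $1$. Then $U^R(\Pi,\sigma)=U^R(\Pi,\sigma')$.
   Context: Setting. The state of nature is $\theta\in\Theta=\{H,L\}$ with prior $\Pr(\theta=H)=p\in(0,1)$. A sender privately observes $\theta$; a receiver does not. $S$ is a finite signal set; conditional on $\theta$, signals are i.i.d. with distribution $\pi_\theta$ on $S$, where $\pi_\theta(s)>0$ for all $s\in S,\theta\in\Theta$, and $\pi_H\neq\pi_L$. The receiver has a finite set of memory states $M$ and chooses a protocol $\Pi=(f,g,a)$: a transition function $f:M\times S\to\Delta(M)$ ($f(i,s)(j)$ is the probability of moving from memory state $i$ to $j$ after signal $s$), an initial distribution $g\in\Delta(M)$ of $m_0$, and an action rule $a:M\to[0,1]$ (probability of action $H$ if the game ends in that memory state). A sender strategy is $\sigma:M\times\Theta\to[0,1]$, the probability of stopping in the current memory state given $\theta$. Timing: $m_0\sim g$; in each period $t=0,1,\dots$, with current memory state $m_t$, the game ends if $m_t$ is absorbing ($f(m_t,s)(m_t)=1$ for all $s$); otherwise the sender stops with probability $\sigma(m_t,\theta)$, ending the game; if not stopped, a signal $s_t\sim\pi_\theta$ is generated and $m_{t+1}\sim f(m_t,s_t)$. When the game ends in state $m_t$ the receiver takes action $H$ with probability $a(m_t)$ and $L$ otherwise. The receiver's payoff is $1$ if the action equals $\theta$ and $0$ otherwise; the sender's payoff is $1$ if the action is $H$ and $0$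 otherwise; there is no discounting; if the game never ends both get $0$. $U^S(\Pi,\sigma),U^R(\Pi,\sigma)$ denote expected payoffs and $\mathrm{br}(\Pi)=\arg\sup_\sigma U^S(\Pi,\sigma)$ is the set of sender best responses. *)

(* Defs.v *)
From HB Require Import structures.
From mathcomp Require Import all_boot all_order all_algebra.
From mathcomp Require Import all_classical all_reals all_analysis.
Set Implicit Arguments. Unset Strict Implicit. Unset Printing Implicit Defensive.
Import Order.TTheory GRing.Theory Num.Theory.
Local Open Scope ring_scope.

(* State of nature: theta : bool, with true = H and false = L. *)

Section Game.
Variables (R : realType) (S M : finType).

Definition is_distr (T : finType) (d : T -> R) :=
  (forall x, 0 <= d x) /\ \sum_(x : T) d x = 1.

Definition signal_ok (pi : bool -> S -> R) :=
  (forall th s, 0 < pi th s) /\ (forall th, \sum_(s : S) pi th s = 1)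
  /\ pi true <> pi false.

(* protocol (f, g, a): f i s j = probability of moving from i to j after s *)
Definition protocol_ok (f : M -> S -> M -> R) (g : M -> R) (a : M -> R) :=
  (forall i s, is_distr (f i s)) /\ is_distr g /\ (forall m, 0 <= a m <= 1).

(* sender strategy: probability of stopping in memory state m given theta *)
Definition strategy_ok (sigma : M -> bool -> R) :=
  forall m th, 0 <= sigma m th <= 1.

Definition absorbing (f : M -> S -> M -> R) (m : M) : bool :=
  [forall s, f m s m == 1].

Variables (pi : bool -> S -> R) (f : M -> S -> M -> R) (g : M -> R).

(* alive th sigma t m = Pr(game not ended before period t and m_t = m | theta) *)
Fixpoint alive (sigma : M -> bool -> R) (th : bool) (t : nat) : M -> R :=
  match t with
  | 0 => g
  | t'.+1 => fun j =>
      \sum_(m : M | ~~ absorbing f m)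
        alive sigma th t' m * (1 - sigma m th) *
        \sum_(s : S) pi th s * f m s j
  end.

Definition ends_at (sigma : M -> bool -> R) (th : bool) (t : nat) (m : M) : R :=
  if absorbing f m then alive sigma th t m
  else alive sigma th t m * sigma m th.

Definition end_prob (sigma : M -> bool -> R) (th : bool) (m : M) : R :=
  limn (fun n => \sum_(t < n) ends_at sigma th t m).

Definition ends_prob (p : R) (sigma : M -> bool -> R) : R :=
  p * \sum_(m : M) end_prob sigma true m
  + (1 - p) * \sum_(m : M) end_prob sigma false m.

(* sender's expected payoff: 1 iff action H *)
Definition US (p : R) (a : M -> R) (sigma : M -> bool -> R) : R :=
  p * \sum_(m : M) end_prob sigma true m * a m
  + (1 - p) * \sum_(m : M) end_prob sigma false m * a m.

(* receiver's expected payoff: 1 iff action matches theta *)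
Definition UR (p : R) (a : M -> R) (sigma : M -> bool -> R) : R :=
  p * \sum_(m : M) end_prob sigma true m * a m
  + (1 - p) * \sum_(m : M) end_prob sigma false m * (1 - a m).

Definition best_response (p : R) (a : M -> R) (sigma : M -> bool -> R) :=
  strategy_ok sigma /\
  forall sigma', strategy_ok sigma' -> US p a sigma' <= US p a sigma.

End Game.

(* Main.v *)
Require Import Defs.
From HB Require Import structures.
From mathcomp Require Import all_boot all_order all_algebra.
From mathcomp Require Import all_classical all_reals all_analysis.
From mathcomp Require Import ring lra.
Import Order.TTheory GRing.Theory Num.Theory.
Import numFieldNormedType.Exports.
Local Open Scope ring_scope.

Lemma lim_sum_seq (R : realType) (I : eqType) (r : seq I) (u : I -> nat -> R) :
  (forall i, cvgn (u i)) ->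
  cvgn (fun n => \sum_(i <- r) u i n) /\
  limn (fun n => \sum_(i <- r) u i n) = \sum_(i <- r) limn (u i).
Proof.
move=> cu; elim: r => [|i r [IHc IHl]].
  have -> : (fun n => \sum_(i <- [::]) u i n) = (fun=> 0 : R).
    by apply: boolp.funext => n; rewrite big_nil.
  by rewrite big_nil; split; [exact: is_cvg_cst | exact: lim_cst].
have -> : (fun n => \sum_(j <- i :: r) u j n) =
   (u i + (fun n => \sum_(j <- r) u j n))%R.
  by apply: boolp.funext => n; rewrite big_cons.
rewrite big_cons; split; first exact: is_cvgD.
by rewrite limD // IHl.
Qed.

Arguments lim_sum_seq {R I} r {u}.

Lemma alive_ge0 (R : realType) (S M : finType) (pi : bool -> S -> R)
  (f : M -> S -> M -> R) (g : M -> R) a sigma th :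
  signal_ok pi -> protocol_ok f g a -> strategy_ok sigma ->
  forall t m, 0 <= alive pi f g sigma th t m.
Proof.
move=> [pi0 _] [fd [[g0 _] _]] so; elim=> [|t IH] m /=; first exact: g0.
apply: sumr_ge0 => i _; apply: mulr_ge0; [apply: mulr_ge0 => //|].
  by have /andP[_ ?] := so i th; rewrite subr_ge0.
apply: sumr_ge0 => s _; apply: mulr_ge0; [exact: ltW|].
by have [f0 _] := fd i s; exact: f0.
Qed.

Arguments alive_ge0 {R S M pi f g a sigma th}.

Lemma mass_step (R : realType) (S M : finType) (pi : bool -> S -> R)
  (f : M -> S -> M -> R) (g : M -> R) a sigma th t :
  signal_ok pi -> protocol_ok f g a ->
  \sum_m ends_at pi f g sigma th t m + \sum_j alive pi f g sigma th t.+1 j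
  = \sum_m alive pi f g sigma th t m.
Proof.
move=> [_ [pi1 _]] [fd _] /=.
rewrite exchange_big /=.
have E : forall m, \sum_j (alive pi f g sigma th t m * (1 - sigma m th) *
      \sum_s pi th s * f m s j) = alive pi f g sigma th t m * (1 - sigma m th).
  move=> m; rewrite -mulr_sumr exchange_big /=.
  under eq_bigr => s _ do rewrite -mulr_sumr (proj2 (fd m s)) mulr1.
  by rewrite pi1 mulr1.
under [X in _ + X]eq_bigr => m _ do rewrite E.
rewrite (bigID (absorbing f) predT (alive _ _ _ _ _ _)) /=.
rewrite (bigID (absorbing f) predT (ends_at _ _ _ _ _ _)) /= -addrA -big_split /=.
congr (_ + _); first by apply: eq_bigr => m H; rewrite /ends_at H.
apply: eq_bigr => m /negbTE H; rewrite /ends_at H; ring.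
Qed.

Arguments mass_step {R S M pi f g a sigma th t}.
Lemma partial_mass (R : realType) (S M : finType) (pi : bool -> S -> R)
  (f : M -> S -> M -> R) (g : M -> R) a sigma th n :
  signal_ok pi -> protocol_ok f g a ->
  \sum_(t < n) \sum_m ends_at pi f g sigma th t m
    + \sum_m alive pi f g sigma th n m = 1.
Proof.
move=> hpi hf; elim: n => [|n IH].
  by rewrite big_ord0 add0r /=; case: hf => _ [[_ ->] _].
by rewrite big_ord_recr /= -addrA (mass_step hpi hf).
Qed.

Arguments partial_mass {R S M pi f g a} sigma th n.

Lemma end_sum_le (R : realType) (S M : finType) (pi : bool -> S -> R)
  (f : M -> S -> M -> R) (g : M -> R) a sigma th :
  signal_ok pi -> protocol_ok f g a -> strategy_ok sigma ->
  \sum_m end_prob pi f g sigma th m <= 1.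
Proof.
move=> hpi hf so.
set u := fun m n => \sum_(t < n) ends_at pi f g sigma th t m.
have e0 t m : 0 <= ends_at pi f g sigma th t m.
  rewrite /ends_at; case: absorbing; first exact: alive_ge0 hpi hf so t m.
  apply: mulr_ge0; first exact: alive_ge0 hpi hf so t m.
  by have /andP[] := so m th.
have P n : \sum_m u m n <= 1.
  rewrite /u exchange_big /= -(partial_mass sigma th n hpi hf) lerDl.
  by apply: sumr_ge0 => m _; exact: alive_ge0 hpi hf so n m.
have ule m n : u m n <= 1.
  apply: le_trans (P n); rewrite (bigD1 m) //= lerDl.
  by apply: sumr_ge0 => j _; apply: sumr_ge0.
have nd m : {homo u m : n k / (n <= k)%N >-> n <= k}.
  apply/nondecreasing_seqP => n; rewrite /u big_ord_recr /= lerDl; exact: e0.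
have cu m : cvgn (u m).
  apply: (cvgP _ (nondecreasing_cvgn (nd m) _)).
  by exists 1 => y [n _ <-]; exact: ule.
have [cs ls] := lim_sum_seq (index_enum M) cu.
rewrite /end_prob -/(u _) .
rewrite -/(u _).
have -> : \sum_m limn (fun n => \sum_(t < n) ends_at pi f g sigma th t m) = \sum_i limn (u i) by [].
by rewrite -ls; apply: limr_le => //; apply: nearW => n; exact: P.
Qed.

Lemma alive_ext (R : realType) (S M : finType) (pi : bool -> S -> R)
  (f : M -> S -> M -> R) (g : M -> R) s1 s2 th :
  (forall m, s1 m th = s2 m th) ->
  forall t m, alive pi f g s1 th t m = alive pi f g s2 th t m.
Proof.
move=> E; elim=> [|t IH] m //=.
by apply: eq_bigr => i _; rewrite IH E.
Qed.

Lemma end_prob_ext (R : realType) (S M : finType) (pi : bool -> S -> R)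
  (f : M -> S -> M -> R) (g : M -> R) s1 s2 th :
  (forall m, s1 m th = s2 m th) ->
  forall m, end_prob pi f g s1 th m = end_prob pi f g s2 th m.
Proof.
move=> E m; rewrite /end_prob; congr (limn _); apply: boolp.funext => n.
by apply: eq_bigr => t _; rewrite /ends_at (@alive_ext _ _ _ pi f g _ _ _ E) E.
Qed.

Lemma mix_le (R : realType) (S M : finType) (p : R)
  (pi : bool -> S -> R) (f : M -> S -> M -> R) (g : M -> R) (a : M -> R)
  (sigma sigma' : M -> bool -> R) :
  0 < p < 1 -> best_response pi f g p a sigma -> strategy_ok sigma' ->
  \sum_m end_prob pi f g sigma' false m * a m <=
  \sum_m end_prob pi f g sigma false m * a m.
Proof.
move=> /andP[p0 p1] [so br] so'.
pose tau := fun m (th : bool) => if th then sigma m true else sigma' m false.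
have sot : strategy_ok tau by move=> m [] /=.
have := br tau sot; rewrite /US.
rewrite (eq_bigr (fun m => end_prob pi f g sigma true m * a m)); last first.
  by move=> m _; rewrite (@end_prob_ext _ _ _ pi f g tau sigma true).
rewrite [X in _ + (1 - p) * X <= _](eq_bigr (fun m => end_prob pi f g sigma' false m * a m)); last first.
  by move=> m _; rewrite (@end_prob_ext _ _ _ pi f g tau sigma' false).
rewrite lerD2l ler_pM2l //; lra.
Qed.

Arguments mix_le {R S M p pi f g a sigma sigma'}.
Arguments end_sum_le {R S M pi f g a} sigma th.

Theorem lemma1 (R : realType) (S M : finType) (p : R)
  (pi : bool -> S -> R) (f : M -> S -> M -> R) (g : M -> R) (a : M -> R)
  (sigma sigma' : M -> bool -> R) :
  0 < p < 1 ->
  signal_ok pi ->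
  protocol_ok f g a ->
  best_response pi f g p a sigma ->
  best_response pi f g p a sigma' ->
  ends_prob pi f g p sigma = 1 ->
  ends_prob pi f g p sigma' = 1 ->
  UR pi f g p a sigma = UR pi f g p a sigma'.
Proof.
move=> hp hpi hf b1 b2 e1 e2.
have B1 := mix_le hp b1 (proj1 b2).
have B2 := mix_le hp b2 (proj1 b1).
have U1 := (proj2 b1) _ (proj1 b2).
have U2 := (proj2 b2) _ (proj1 b1).
have T1 := end_sum_le sigma true hpi hf (proj1 b1).
have F1 := end_sum_le sigma false hpi hf (proj1 b1).
have T2 := end_sum_le sigma' true hpi hf (proj1 b2).
have F2 := end_sum_le sigma' false hpi hf (proj1 b2).
move: e1 e2 U1 U2; rewrite /ends_prob /US /UR.
have sB : forall s, \sum_m end_prob pi f g s false m * (1 - a m) =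
   \sum_m end_prob pi f g s false m - \sum_m end_prob pi f g s false m * a m.
  by move=> s; rewrite -sumrB; apply: eq_bigr => m _; rewrite mulrBr mulr1.
rewrite !sB.
move: T1 F1 T2 F2 B1 B2 hp.
set x1 := \sum_m end_prob _ _ _ sigma true m.
set y1 := \sum_m end_prob _ _ _ sigma false m.
set x2 := \sum_m end_prob _ _ _ sigma' true m.
set y2 := \sum_m end_prob _ _ _ sigma' false m.
set a1 := \sum_m end_prob _ _ _ sigma true m * a m.
set b1' := \sum_m end_prob _ _ _ sigma false m * a m.
set a2 := \sum_m end_prob _ _ _ sigma' true m * a m.
set b2' := \sum_m end_prob _ _ _ sigma' false m * a m.
move=> T1 F1 T2 F2 B1 B2 /andP[p0 p1] e1 e2 U1 U2.
have eb : b1' = b2' by apply/eqP; rewrite eq_le B1 B2.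
have ey1 : y1 = 1 by nra.
have ey2 : y2 = 1 by nra.
rewrite ey1 ey2 eb; rewrite eb in U1 U2; nra.
Qed.
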